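(* Let $n\ge2$, $\delta>0$, $d_0>0$, and $f,g:\mathbb{R}^3\to\mathbb{R}$ sufficiently smooth. Consider the $n$-patch model with identical diffusion rates, for $j\in\Omega=\{1,\dots,n\}$, $$\dot u_j=\delta d_0\sum_{i\in\Omega}(u_i-u_j)+f(u_j,v_j,\alpha),\qquad \dot v_j=\delta d_0\sum_{i\in\Omega}(v_i-v_j)+g(u_j,v_j,\alpha)$$ (i.e. the model with $\delta\sum_i(d_{11}(u_i-u_j)+d_{12}(v_i-v_j))$ and $\delta\sum_i(d_{21}(u_i-u_j)+d_{22}(v_i-v_j))$ where $d_{11}=d_{22}=d_0$, $d_{12}=d_{21}=0$). Suppose the kinetic system $\dot u=f(u,v,\alpha_0)$, $\dot v=g(u,v,\alpha_0)$ has a stable periodic solution $\psi(t)=(u_0(t),v_0(t))$ with minimum period $p>0$ whose Floquet multipliers are $\gamma=1$ and $\tilde\gamma\in(0,1)$. Then, with $\alpha=\alpha_0$, for sufficiently small $\delta>0$ the synchronous periodic solution $(\psi(t),\dots,\psi(t))^T$ is stable with respect to the patch model. *)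

(* Defs.v *)
From HB Require Import structures.
From mathcomp Require Import all_boot all_order all_algebra.
From mathcomp Require Import all_classical all_reals all_analysis.
From mathcomp Require complex.
Import complex.ComplexField.
Set Implicit Arguments. Unset Strict Implicit. Unset Printing Implicit Defensive.
Import Order.TTheory GRing.Theory Num.Theory.
Import numFieldNormedType.Exports.
Local Open Scope ring_scope.

Section Defs.
Variable R : realType.

Definition jac (m : nat) (F : 'rV[R]_m -> 'rV[R]_m) (x : 'rV[R]_m) : 'M[R]_m :=
  \matrix_(i < m, j < m) derive1 (fun h : R => F (x + h *: delta_mx 0 j) 0 i) 0.

Definition C1_field (m : nat) (F : 'rV[R]_m -> 'rV[R]_m) : Prop :=
  (forall x i j, derivable (fun h : R => F (x + h *: delta_mx 0 j) 0 i) 0 1) /\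
  (forall i j, continuous (fun x => jac F x i j)).

Definition is_solution (m : nat) (F : 'rV[R]_m -> 'rV[R]_m) (x : R -> 'rV[R]_m) :=
  forall t : R, is_derive t 1 x (F (x t)).

Definition min_periodic (m : nat) (x : R -> 'rV[R]_m) (p : R) : Prop :=
  0 < p /\ (forall t, x (t + p) = x t) /\
  (forall q, 0 < q -> q < p -> exists t, x (t + q) <> x t).

Definition principal_fundamental (m : nat) (F : 'rV[R]_m -> 'rV[R]_m)
    (x : R -> 'rV[R]_m) (Phi : R -> 'M[R]_m) : Prop :=
  Phi 0 = 1%:M /\ forall t : R, is_derive t 1 Phi (jac F (x t) *m Phi t).

(* The Floquet multipliers of the periodic solution x (period p) are the
   eigenvalues (with algebraic multiplicity) of the monodromy matrix Phi(p),
   i.e. the roots of its characteristic polynomial. *)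
Definition floquet_charpoly (m : nat) (F : 'rV[R]_m -> 'rV[R]_m)
    (x : R -> 'rV[R]_m) (p : R) (P : {poly R}) : Prop :=
  exists Phi, principal_fundamental F x Phi /\ char_poly (Phi p) = P.

(* Stability of a periodic solution (Floquet / Andronov-Witt criterion):
   x is a p-periodic solution (minimal period p), and its Floquet multipliers
   are 1 (simple) and others of modulus < 1. *)
Definition floquet_stable (m : nat) (F : 'rV[R]_m -> 'rV[R]_m)
    (x : R -> 'rV[R]_m) (p : R) : Prop :=
  is_solution F x /\ min_periodic x p /\
  exists Q : {poly R}, floquet_charpoly F x p (('X - 1%:P) * Q) /\
    forall z : complex.complex R,
      root (map_poly (complex.real_complex R) Q) z -> `|z| < 1.

Definition kinetic (f g : R -> R -> R -> R) (a : R) (x : 'rV[R]_2) : 'rV[R]_2 :=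
  \row_(k < 2) (if k == 0 then f (x 0 0) (x 0 1) a else g (x 0 0) (x 0 1) a).

Definition pair_fun (u v : R -> R) (t : R) : 'rV[R]_2 :=
  \row_(k < 2) (if k == 0 then u t else v t).

(* n-patch model; state (u_1..u_n, v_1..v_n) in R^(n+n):
   u_j' = delta sum_i (d11 (u_i - u_j) + d12 (v_i - v_j)) + f(u_j, v_j, a)
   v_j' = delta sum_i (d21 (u_i - u_j) + d22 (v_i - v_j)) + g(u_j, v_j, a). *)
Definition patch_field (n : nat) (delta d11 d12 d21 d22 : R)
    (f g : R -> R -> R -> R) (a : R) (x : 'rV[R]_(n + n)) : 'rV[R]_(n + n) :=
  let u j := x 0 (lshift n j) in
  let v j := x 0 (rshift n j) in
  row_mx
    (\row_(j < n) (delta * \sum_(i < n) (d11 * (u i - u j) + d12 * (v i - v j))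
                   + f (u j) (v j) a))
    (\row_(j < n) (delta * \sum_(i < n) (d21 * (u i - u j) + d22 * (v i - v j))
                   + g (u j) (v j) a)).

Definition sync_fun (n : nat) (u v : R -> R) (t : R) : 'rV[R]_(n + n) :=
  row_mx (\row_(j < n) u t) (\row_(j < n) v t).

End Defs.

(* Main.v *)
Require Import Defs.
From HB Require Import structures.
From mathcomp Require Import all_boot all_order all_algebra.
From mathcomp Require Import all_classical all_reals all_analysis.
From mathcomp Require complex.
Import complex.ComplexField.
Import Order.TTheory GRing.Theory Num.Theory.
Import numFieldNormedType.Exports.
From mathcomp Require Import ring lra.
Set Implicit Arguments. Unset Strict Implicit. Unset Printing Implicit Defensive.
Local Open Scope ring_scope.

Lemma det22 (F : comNzRingType) (A : 'M[F]_2) : \det A = A 0 0 * A 1 1 - A 0 1 * A 1 0.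
Proof.
rewrite (expand_det_row _ 0) !big_ord_recl big_ord0 addr0 /cofactor !det_mx11 !mxE /=.
have L0 (i : 'I_2) : val i = 0%N -> i = 0 by move=> H; apply: val_inj.
have L1 (i : 'I_2) : val i = 1%N -> i = 1 by move=> H; apply: val_inj.
rewrite (L1 (lift 0 0)) // (L0 (lift 1 0)) // (L0 ord0) //.
by rewrite /bump /= expr0 expr1 mul1r mulN1r mulrN.
Qed.
Section Kr.
Variables (F : fieldType) (n : nat).

Definition cidx (r : 'I_(n + n)) : 'I_2 := if fintype.split r is inl _ then 0 else 1.
Definition pidx (r : 'I_(n + n)) : 'I_n :=
  match fintype.split r with inl j => j | inr j => j end.

Lemma cidxL j : cidx (lshift n j) = 0.
Proof. by rewrite /cidx -[lshift n j]/(unsplit (inl j)) unsplitK. Qed.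
Lemma cidxR j : cidx (rshift n j) = 1.
Proof. by rewrite /cidx -[rshift n j]/(unsplit (inr j)) unsplitK. Qed.
Lemma pidxL j : pidx (lshift n j) = j.
Proof. by rewrite /pidx -[lshift n j]/(unsplit (inl j)) unsplitK. Qed.
Lemma pidxR j : pidx (rshift n j) = j.
Proof. by rewrite /pidx -[rshift n j]/(unsplit (inr j)) unsplitK. Qed.

Lemma ord_cases (r : 'I_(n + n)) :
  (exists j, r = lshift n j) \/ (exists j, r = rshift n j).
Proof. by case: (split_ordP r) => j ->; [left|right]; exists j. Qed.

Definition kr (B : 'M[F]_2) (C : 'M[F]_n) : 'M[F]_(n + n) :=
  \matrix_(r, s) (B (cidx r) (cidx s) * C (pidx r) (pidx s)).

Lemma sum_split (G : 'I_(n + n) -> F) :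
  \sum_(q < n + n) G q = \sum_(j < n) G (lshift n j) + \sum_(j < n) G (rshift n j).
Proof. by rewrite big_split_ord. Qed.

Lemma kr_mul B C B' C' : kr B C *m kr B' C' = kr (B *m B') (C *m C').
Proof.
apply/matrixP => r s; rewrite !mxE sum_split.
under eq_bigr do rewrite !mxE cidxL pidxL.
under [X in _ + X]eq_bigr do rewrite !mxE cidxR pidxR.
rewrite big_ord_recr big_ord_recr big_ord0 /= add0r mulrDl.
rewrite !big_distrr /=.
congr (_ + _); apply: eq_bigr => j _;
  by rewrite mulrACA; congr (B _ _ * B' _ _ * _); apply: val_inj.
Qed.

Lemma kr11 : kr 1%:M 1%:M = 1%:M.
Proof.
apply/matrixP => r s; rewrite !mxE.
case: (ord_cases r) => [[j ->]|[j ->]]; case: (ord_cases s) => [[k ->]|[k ->]];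
  rewrite ?cidxL ?cidxR ?pidxL ?pidxR ?eq_lshift ?eq_rshift ?eq_lrshift ?eq_rlshift //=;
  by rewrite ?mul0r ?mul1r.
Qed.

Lemma kr_trig B C : is_trig_mx B -> is_trig_mx C -> is_trig_mx (kr B C).
Proof.
move=> /is_trig_mxP HB /is_trig_mxP HC; apply/is_trig_mxP => r s.
rewrite !mxE.
case: (ord_cases r) => [[j ->]|[j ->]]; case: (ord_cases s) => [[k ->]|[k ->]];
  rewrite ?cidxL ?cidxR ?pidxL ?pidxR /= => lt.
- by rewrite HC ?mulr0.
- by rewrite HB ?mul0r.
- by exfalso; move: lt; rewrite ltnNge (leq_trans (ltnW (ltn_ord k))) ?leq_addr.
- by rewrite HC ?mulr0 // -(ltn_add2l n).
Qed.

Lemma kr_unit B C : B \in unitmx -> C \in unitmx -> kr B C \in unitmx.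
Proof.
move=> uB uC; have := @mulmx1_unit _ _ (kr B C) (kr (invmx B) (invmx C)).
by rewrite kr_mul !mulmxV // kr11 => /(_ erefl) [].
Qed.

Lemma char_poly_sim m (S A L : 'M[F]_m) :
  S \in unitmx -> S *m A = L *m S -> char_poly A = char_poly L.
Proof.
move=> uS E.
have E2 : char_poly_mx L *m map_mx polyC S = map_mx polyC S *m char_poly_mx A.
  rewrite /char_poly_mx mulmxBl mulmxBr -!map_mxM -E.
  by rewrite mul_scalar_mx mul_mx_scalar.
have nz : (\det S)%:P != 0 by rewrite polyC_eq0; move: uS; rewrite unitmxE unitfE.
apply: (mulfI nz); rewrite /char_poly.
have := congr1 determinant E2; rewrite !det_mulmx det_map_mx => <-.
by rewrite mulrC.
Qed.

End Kr.

Lemma ord2_cases (i : 'I_2) : i = 0 \/ i = 1.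
Proof. by case: i => [[|[|//]] Hi]; [left|right]; apply: val_inj. Qed.

Lemma tri2 (F : fieldType) (P : 'M[F]_2) (g : F) :
  char_poly P = ('X - 1%:P) * ('X - g%:P) ->
  exists S L, [/\ S \in unitmx, S *m P = L *m S, is_trig_mx L, L 0 0 = 1 & L 1 1 = g].
Proof.
move=> HP.
have : eigenvalue P 1 by rewrite eigenvalue_root_char HP rootM root_XsubC eqxx.
case/eigenvalueP => v Hv vnz.
pose S : 'M[F]_2 := \matrix_(i, j) if i == 0 then v 0 j else
   (if v 0 0 == 0 then (j == 0)%:R else (j == 1)%:R).
have uS : S \in unitmx.
  rewrite unitmxE unitfE det22 !mxE /=.
  have [v0|v0] := eqVneq (v 0 0) 0; last first.
    by rewrite mulr1 mulr0 subr0.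
  rewrite v0 mul0r mulr1 sub0r oppr_eq0; apply: contra vnz => /eqP v1.
  apply/eqP/matrixP => i j; rewrite (ord1 i) mxE.
  by case: (ord2_cases j) => ->.
pose L := S *m P *m invmx S.
have SL : S *m P = L *m S by rewrite /L mulmxKV.
have row0 : forall j, (S *m P) 0 j = S 0 j.
  move=> j; rewrite !mxE -[RHS](_ : (v *m P) 0 j = _); last by rewrite Hv scale1r.
  by rewrite !mxE; apply: eq_bigr => k _; rewrite !mxE eqxx.
have L0 : forall j, L 0 j = (1%:M : 'M[F]_2) 0 j.
  move=> j; rewrite -(mulmxV uS) /L !mxE; apply: eq_bigr => k _.
  by rewrite row0.
have trL : is_trig_mx L.
  apply/is_trig_mxP => i j.
  case: (ord2_cases i) => ->; case: (ord2_cases j) => -> //= _.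
  by rewrite L0 mxE.
exists S, L; split => //; first by rewrite L0 mxE.
have := char_poly_sim uS SL; rewrite HP char_poly_trig // !big_ord_recr big_ord0 /= mul1r.
have -> : (widen_ord (leqnSn 1) ord_max) = (0 : 'I_2) by apply: val_inj.
have -> : (ord_max : 'I_2) = 1 by apply: val_inj.
rewrite L0 mxE /= => /(mulfI (negbT (polyXsubC_eq0 _))) E.
have : root ('X - g%:P) g by rewrite root_XsubC.
by rewrite E root_XsubC => /eqP.
Qed.


Lemma sum_delta (F : nzRingType) m (i : 'I_m) (x : 'I_m -> F) :
  \sum_(l < m) (l == i)%:R * x l = x i.
Proof.
rewrite (bigD1 i) //= eqxx mul1r big1 ?addr0 // => l /negbTE ->.
by rewrite mul0r.
Qed.

Lemma sum_delta' (F : nzRingType) m (i : 'I_m) (x : 'I_m -> F) :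
  \sum_(l < m) (i == l)%:R * x l = x i.
Proof. by under eq_bigr do rewrite eq_sym; exact: sum_delta. Qed.

Definition Mmat (F : numFieldType) n (e : F) : 'M[F]_n :=
  \matrix_(j, k) (e * (j == k)%:R + (1 - e) / n%:R).

Lemma trim (F : numFieldType) (n' : nat) (e : F) :
  exists S L, [/\ S \in unitmx, S *m Mmat n'.+1 e = L *m S, is_trig_mx L,
    L ord0 ord0 = 1 & forall j, j != ord0 -> L j j = e].
Proof.
set n := n'.+1.
have nz : (n%:R : F) != 0 by rewrite pnatr_eq0.
pose S : 'M[F]_n := \matrix_(i, k) (if i == ord0 then 1 else (i == k)%:R).
pose L : 'M[F]_n := \matrix_(i, k) (if i == ord0 then (k == ord0)%:R
   else (k == ord0)%:R * ((1 - e) / n%:R) + (i == k)%:R * e).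
exists S, L; rewrite /S /L; split.
- rewrite unitmxE unitfE -det_tr det_trig.
    rewrite big1 ?oner_eq0 // => i _; rewrite !mxE eqxx; by case: ifP.
  apply/is_trig_mxP => i k ik; rewrite !mxE.
  have -> : (k == ord0) = false by apply/negbTE; rewrite -val_eqE /= -lt0n (leq_ltn_trans _ ik).
  by have -> : (k == i) = false by apply/negbTE; rewrite -val_eqE /= gtn_eqF.
- apply/matrixP => i k; rewrite !mxE.
  have [->|ni] := eqVneq i ord0.
    under eq_bigr do rewrite !mxE eqxx mul1r.
    rewrite [RHS](bigD1 ord0) //= !mxE eqxx mul1r [X in _ = _ + X]big1 ?addr0; last first.
      by move=> l /negbTE nl; rewrite !mxE nl mul0r.
    rewrite big_split /= sumr_const card_ord -mulr_natr.
    under eq_bigr do rewrite mulrC.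
    rewrite sum_delta; field; exact: nz.
under eq_bigr do rewrite !mxE (negbTE ni).
  rewrite sum_delta'.
  under eq_bigr do rewrite !mxE (negbTE ni) mulrDl.
  rewrite big_split /=.
  under eq_bigr do rewrite -mulrA.
  under [X in _ = _ + X]eq_bigr do rewrite -mulrA.
  rewrite sum_delta sum_delta' eqxx (negbTE ni).
  ring.
- apply/is_trig_mxP => i k ik; rewrite !mxE.
  have -> : (k == ord0) = false by apply/negbTE; rewrite -val_eqE /= -lt0n (leq_ltn_trans _ ik).
  have -> : (i == k) = false by apply/negbTE; rewrite -val_eqE /= ltn_eqF.
  by case: ifP => _; rewrite ?mul0r ?addr0.
- by rewrite !mxE eqxx.
- by move=> j nj; rewrite !mxE (negbTE nj) eqxx mul0r add0r mul1r.
Qed.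

Lemma charpoly_patch (F : numFieldType) (n' : nat) (P : 'M[F]_2) (g e : F) :
  char_poly P = ('X - 1%:P) * ('X - g%:P) ->
  exists (m : nat) (a : 'I_m -> F),
    char_poly (kr P (Mmat n'.+2 e)) = ('X - 1%:P) * \prod_(i < m) ('X - (a i)%:P)
    /\ forall i, a i = e \/ a i = g \/ a i = g * e.
Proof.
move=> HP.
have [S2 [L2 [uS2 SL2 tL2 L200 L211]]] := tri2 HP.
have [Sm [Lm [uSm SLm tLm Lm00 Lmjj]]] := trim n'.+1 e.
have E : char_poly (kr P (Mmat n'.+2 e)) = char_poly (kr L2 Lm).
  apply: (char_poly_sim (kr_unit uS2 uSm)).
  by rewrite !kr_mul SL2 SLm.
pose a (i : 'I_(n'.+1 + n'.+2)) := match fintype.split i with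
  | inl j => L2 0 0 * Lm (lift ord0 j) (lift ord0 j)
  | inr j => L2 1 1 * Lm j j end.
exists (n'.+1 + n'.+2), a; split.
  rewrite E char_poly_trig ?kr_trig // big_split_ord /=.
  rewrite [X in _ = _ * X]big_split_ord /= big_ord_recl /= mulrA.
  rewrite !mxE cidxL pidxL L200 Lm00 mulr1; congr (_ * _ * _).
    apply: eq_bigr => j _; rewrite !mxE cidxL pidxL /a.
    by rewrite -[lshift _ j]/(unsplit (inl j)) unsplitK.
  apply: eq_bigr => j _; rewrite !mxE cidxR pidxR /a.
  by rewrite -[rshift _ j]/(unsplit (inr j)) unsplitK.
move=> i; rewrite /a; case: (fintype.split i) => j.
  by left; rewrite L200 mul1r Lmjj // neq_lift.
right; rewrite L211; have [->|nj] := eqVneq j ord0.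
  by left; rewrite Lm00 mulr1.
by right; rewrite Lmjj.
Qed.

Lemma is_derive_mxP (R : realType) m k (M : R -> 'M[R]_(m, k)) (D : 'M[R]_(m, k)) (t : R) :
  is_derive t (1:R) M D <-> forall i j, is_derive t (1:R) (fun x => M x i j) (D i j).
Proof.
split.
  move=> H i j; have d := @ex_derive _ _ _ _ _ _ _ H; have v := @derive_val _ _ _ _ _ _ _ H.
  apply: DeriveDef; first exact: (derivable_mxP M t 1).1 d i j.
  by rewrite -v derive_mx // mxE.
move=> H; have d : derivable M t 1.
  by apply/derivable_mxP => i j; have := H i j; case.
apply: DeriveDef => //; rewrite derive_mx //; apply/matrixP => i j.
by rewrite mxE derive_val.
Qed.

Section Patch.
Variables (R : realType) (n : nat) (d0 dl al : R) (f g : R -> R -> R -> R) (u0 v0 : R -> R).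
Local Notation patch := (patch_field dl d0 0 0 d0 f g al).
Local Notation kin := (kinetic f g al).
Local Notation sync := (sync_fun n u0 v0).
Local Notation psi := (pair_fun u0 v0).

Lemma pair00 t : psi t 0 0 = u0 t. Proof. by rewrite !mxE. Qed.
Lemma pair01 t : psi t 0 1 = v0 t. Proof. by rewrite !mxE. Qed.

Lemma sync_entry t r : sync t 0 r = psi t 0 (cidx r).
Proof.
case: (ord_cases r) => [[j ->]|[j ->]];
  by rewrite /sync_fun ?row_mxEl ?row_mxEr ?cidxL ?cidxR !mxE.
Qed.

Lemma syncL t i : sync t 0 (lshift n i) = u0 t.
Proof. by rewrite sync_entry cidxL pair00. Qed.
Lemma syncR t i : sync t 0 (rshift n i) = v0 t.
Proof. by rewrite sync_entry cidxR pair01. Qed.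

Lemma patch_sync t r : patch (sync t) 0 r = kin (psi t) 0 (cidx r).
Proof.
have := syncL t; have := syncR t; move: (sync t) => x xr xl.
case: (ord_cases r) => [[j ->]|[j ->]];
  rewrite /patch_field ?row_mxEl ?row_mxEr ?cidxL ?cidxR !mxE /= xl xr;
  rewrite big1 ?mulr0 ?add0r ?pair00 ?pair01 //;
  by move=> i _; rewrite xl xr !subrr !mulr0 addr0.
Qed.

Lemma sum_lin (c u h b : R) (k : 'I_n) (w : 'I_n -> R) :
  \sum_(i < n) (c * (u + h * (i == k)%:R - (u + h * b)) + 0 * w i) =
  c * h * (1 - n%:R * b).
Proof.
rewrite (eq_bigr (fun i => (i == k)%:R * (c * h) - c * h * b)); last first.
  by move=> i _; ring.
rewrite big_split /= sum_delta sumrN sumr_const card_ord -mulr_natr; ring.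
Qed.

Lemma sum_lin' (c u h b : R) (k : 'I_n) (w : 'I_n -> R) :
  \sum_(i < n) (0 * w i + c * (u + h * (i == k)%:R - (u + h * b))) =
  c * h * (1 - n%:R * b).
Proof. by rewrite -(sum_lin c u h b k w); apply: eq_bigr => i _; rewrite addrC. Qed.

Lemma sum_const0 (c u v : R) (w : 'I_n -> R) :
  \sum_(i < n) (c * (u - v) * 0 + 0 * w i) = 0.
Proof. by rewrite big1 // => i _; ring. Qed.

Definition Lap (c : R) : 'M[R]_n := \matrix_(j, k) (c * (1 - n%:R * (j == k)%:R)).

Lemma patch_line t r s :
  (fun h => patch (sync t + h *: delta_mx 0 s) 0 r) =
  (fun h => (cidx r == cidx s)%:R * (dl * d0 * (1 - n%:R * (pidx r == pidx s)%:R)) * h +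
     (if pidx r == pidx s then kin (psi t + h *: delta_mx 0 (cidx s)) 0 (cidx r)
      else kin (psi t) 0 (cidx r))).
Proof.
apply/funext => h.
have := syncL t; have := syncR t; move: (sync t) => x xr xl.
case: (ord_cases r) => [[j ->]|[j ->]]; case: (ord_cases s) => [[k ->]|[k ->]];
  rewrite /patch_field ?row_mxEl ?row_mxEr ?cidxL ?cidxR ?pidxL ?pidxR !mxE /=.
all: under eq_bigr do rewrite !mxE /= xl xr ?eq_lshift ?eq_rshift ?eq_lrshift ?eq_rlshift.
all: rewrite xl xr ?eq_lshift ?eq_rshift ?eq_lrshift ?eq_rlshift.
- rewrite sum_lin; have [E|njk] := eqVneq j k; [subst k|]; rewrite ?eqxx ?(negbTE njk) /=;
  rewrite ?mulr1 ?mulr0 ?addr0 ?subr0; ring.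
- rewrite big1; last by move=> i _; rewrite subrr mulr0 mul0r addr0.
  have [E|njk] := eqVneq j k; [subst k|]; rewrite ?eqxx ?(negbTE njk) /=;
  rewrite ?mulr1 ?mulr0 ?mul0r ?addr0 ?add0r //.
- rewrite big1; last by move=> i _; rewrite subrr mulr0 mul0r add0r.
  have [E|njk] := eqVneq j k; [subst k|]; rewrite ?eqxx ?(negbTE njk) /=;
  rewrite ?mulr1 ?mulr0 ?mul0r ?addr0 ?add0r //.
- rewrite sum_lin'; have [E|njk] := eqVneq j k; [subst k|]; rewrite ?eqxx ?(negbTE njk) /=;
  rewrite ?mulr1 ?mulr0 ?addr0 ?subr0; ring.
Qed.

Lemma is_derive_lin (K x : R) : is_derive x (1:R) (fun h : R => K * h) K.
Proof.
have H := is_deriveZ K (is_derive_id x (1:R)).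
by apply: is_derive_eq H _; rewrite /GRing.scale /= mulr1.
Qed.

Lemma derive1_lin (K c : R) : derive1 (fun h : R => K * h + c) 0 = K.
Proof.
have HS := is_deriveD (is_derive_lin K 0) (is_derive_cst c (0:R) (1:R)).
have HS' : is_derive (0:R) (1:R) (fun h => K * h + c) (K + 0) := HS.
by rewrite derive1E (@derive_val _ _ _ _ _ _ _ HS') addr0.
Qed.

Lemma jac_patch t : C1_field kin ->
  jac patch (sync t) = kr 1%:M (Lap (dl * d0)) + kr (jac kin (psi t)) 1%:M.
Proof.
move=> [Hd _]; apply/matrixP => r s; rewrite /jac [LHS]mxE patch_line.
rewrite [RHS]mxE !mxE.
set K := (_ * _)%R.
have [E|nE] := eqVneq (pidx r) (pidx s).
  have := derivableP (Hd (psi t) (cidx r) (cidx s)) => HG.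
  have := is_deriveD (is_derive_lin K 0) HG => HS.
  have HS' : is_derive (0:R) (1:R) (fun h => K * h +
     kin (psi t + h *: delta_mx 0 (cidx s)) 0 (cidx r)) (K + 'D_1 (fun h : R => kin (psi t + h *: delta_mx 0 (cidx s)) 0 (cidx r)) 0) := HS.
  by rewrite derive1E (@derive_val _ _ _ _ _ _ _ HS') mulr1 -derive1E.
rewrite derive1_lin.
by rewrite mulr0 addr0.
Qed.

Definition ee (t : R) := expR (- (n%:R * (dl * d0)) * t).
Definition Mt (t : R) : 'M[R]_n := Mmat n (ee t).

Lemma is_derive_ee t : is_derive t (1:R) ee (ee t * (- (n%:R * (dl * d0)))).
Proof.
set a := - (n%:R * (dl * d0)).
have Hg : is_derive t (1:R) (fun x : R => a * x) a by exact: is_derive_lin.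
have := is_derive1_comp (is_derive_expR (a * t)) Hg.
by [].
Qed.

Lemma is_derive_aff (h : R -> R) (B A d t : R) :
  is_derive t (1:R) h d -> is_derive t (1:R) (fun x => B * h x + A) (B * d).
Proof.
move=> H; have H2 := is_deriveD (is_deriveZ B H) (is_derive_cst A t (1:R)).
have H3 : is_derive t (1:R) (fun x => B * h x + A) (B *: d + 0) := H2.
by move: H3; rewrite addr0.
Qed.

Lemma dM t j k : (0 < n)%N ->
  is_derive t (1:R) (fun x => Mt x j k) ((Lap (dl * d0) *m Mt t) j k).
Proof.
move=> n0; have nz : (n%:R : R) != 0 by rewrite pnatr_eq0 -lt0n.
set c := dl * d0.
have -> : (fun x => Mt x j k) =
    (fun x => ((j == k)%:R - n%:R^-1) * ee x + n%:R^-1).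
  by apply/funext => x; rewrite /Mt /Mmat mxE; field.
apply: (is_derive_eq (is_derive_aff ((j == k)%:R - n%:R^-1) (n%:R^-1) (is_derive_ee t))).
rewrite mxE.
rewrite (eq_bigr (fun l => (l == k)%:R * (c * ee t) + c * (1 - ee t) / n%:R -
   (j == l)%:R * (n%:R * c * Mt t l k))); last first.
  by move=> l _; rewrite /Lap /Mt /Mmat !mxE; field.
rewrite big_split big_split /= sum_delta sumrN sum_delta' sumr_const card_ord.
rewrite /Mt /Mmat mxE -mulr_natr /c; field.
exact: nz.
Qed.

Lemma dPhiP (Phi : R -> 'M[R]_2) t : (0 < n)%N -> C1_field kin ->
  is_derive t (1:R) Phi (jac kin (psi t) *m Phi t) ->
  is_derive t (1:R) (fun x => kr (Phi x) (Mt x)) (jac patch (sync t) *m kr (Phi t) (Mt t)).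
Proof.
move=> n0 HC HP; rewrite jac_patch // mulmxDl !kr_mul !mul1mx.
apply/is_derive_mxP => r s.
have H1 := (is_derive_mxP _ _ _).1 HP (cidx r) (cidx s).
have H2 := dM t (pidx r) (pidx s) n0.
have H3 := is_deriveM H1 H2.
have -> : (fun x => kr (Phi x) (Mt x) r s) =
   (fun x => Phi x (cidx r) (cidx s)) * (fun x => Mt x (pidx r) (pidx s)).
  by apply/funext => x; rewrite mxE.
apply: (is_derive_eq H3).
by rewrite !mxE /GRing.scale /= mulrC [in X in _ = _ + X]mulrC.
Qed.

Lemma Mt0 : Mt 0 = 1%:M.
Proof.
apply/matrixP => j k; rewrite /Mt /Mmat /ee !mxE mulr0 expR0 subrr mul0r addr0 mul1r.
by [].
Qed.

End Patch.

Lemma roots_lt1 (R : rcfType) m (a : 'I_m -> R) :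
  (forall i, 0 <= a i < 1) -> forall z : complex.complex R,
  root (map_poly (complex.real_complex R) (\prod_(i < m) ('X - (a i)%:P))) z -> `|z| < 1.
Proof.
elim: m a => [|m IH] a Ha z; first by rewrite big_ord0 rmorph1 rootC oner_eq0.
rewrite big_ord_recl rmorphM /= rootM => /orP [].
  rewrite map_polyXsubC root_XsubC => /eqP ->.
  have /andP [a0 a1] := Ha ord0.
  rewrite ger0_norm ?complex.ler0c //.
  by rewrite -[1 : complex.complex R]/(complex.real_complex R 1) complex.ltcR.
by apply: IH => i; exact: Ha.
Qed.


Theorem proposition3p3 (R : realType) (n : nat) (d0 : R)
    (f g : R -> R -> R -> R) (alpha0 : R) (u0 v0 : R -> R) (p gamma : R) :
  (2 <= n)%N -> 0 < d0 ->
  (forall a : R, C1_field (kinetic f g a)) ->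
  is_solution (kinetic f g alpha0) (pair_fun u0 v0) ->
  min_periodic (pair_fun u0 v0) p ->
  floquet_stable (kinetic f g alpha0) (pair_fun u0 v0) p ->
  0 < gamma < 1 ->
  floquet_charpoly (kinetic f g alpha0) (pair_fun u0 v0) p
    (('X - 1%:P) * ('X - gamma%:P)) ->
  exists delta1 : R, 0 < delta1 /\
    forall delta : R, 0 < delta -> delta < delta1 ->
      floquet_stable (patch_field delta d0 0 0 d0 f g alpha0)
        (sync_fun n u0 v0) p.
Proof.
move=> n2 d0pos HC1 Hsol [p0 [Hpp Hmin]] _ /andP [g0 g1] [Phi [[Phi0 HPhi] HchP]].
exists 1; split => // dl dl0 _.
have n0 : (0 < n)%N by apply: (leq_trans _ n2).
split; [|split; [split; [|split]|]].
- move=> t; apply/is_derive_mxP => i r; rewrite (ord1 i).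
  have -> : (fun x => sync_fun n u0 v0 x 0 r) = (fun x => pair_fun u0 v0 x 0 (cidx r)).
    by apply/funext => x; rewrite sync_entry.
  rewrite patch_sync.
  exact: ((is_derive_mxP _ _ _).1 (Hsol t) 0 (cidx r)).
- exact: p0.
- move=> t; apply/matrixP => i r; by rewrite (ord1 i) !sync_entry Hpp.
- move=> q q0 qp; have [t Ht] := Hmin q q0 qp; exists t => E; apply: Ht.
  apply/matrixP => i c; rewrite (ord1 i).
  pose j0 : 'I_n := Ordinal n0.
  case: (ord2_cases c) => ->.
    by have := congr1 (fun M : 'M[R]_(1, n + n) => M 0 (lshift n j0)) E; rewrite /= !sync_entry cidxL.
  by have := congr1 (fun M : 'M[R]_(1, n + n) => M 0 (rshift n j0)) E; rewrite /= !sync_entry cidxR.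
case: n n2 n0 => [|[|n']] // _ n0.
have [m [a [Ha Hva]]] := charpoly_patch n' (ee n'.+2 d0 dl p) HchP.
exists (\prod_(i < m) ('X - (a i)%:P)); split.
  exists (fun x => kr (Phi x) (Mt n'.+2 d0 dl x)); split; last by rewrite /Mt Ha.
  split; first by rewrite Phi0 Mt0 kr11.
  by move=> t; apply: dPhiP => //; exact: HC1.
apply: roots_lt1 => i.
have e0 : 0 < ee n'.+2 d0 dl p by exact: expR_gt0.
have e1 : ee n'.+2 d0 dl p < 1.
  rewrite /ee expR_lt1 mulNr oppr_lt0; apply: mulr_gt0 => //.
  by apply: mulr_gt0; [rewrite ltr0n | exact: mulr_gt0].
case: (Hva i) => [->|[->|->]]; apply/andP; split; try lra.
- by apply: mulr_ge0; lra.
- by rewrite -[1]mul1r ltr_pM //; lra.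
Qed.
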